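(* Let $k\ge3$ and $m\ge1$ be integers, let $\alpha\in(0,1)$, and let $F$ be a $k$-partite $k$-graph each of whose parts has exactly $m$ vertices. There exist $\eta>0$ and $n_0$ such that for every $n\ge n_0$ the following holds: if $H$ is a $k$-partite $k$-graph each of whose parts has exactly $n$ vertices and $\delta'_{k-1}(H)\ge\alpha n$, then every vertex $v\in V(H)$ is contained in at least $\eta n^{km-1}$ copies of $F$ in $H$.
   Context: A $k$-partite $k$-graph $H$ is a $k$-graph with a fixed partition $V(H)=V_1\cup\dots\cup V_k$ (its parts) such that every edge meets each $V_i$ in at most one vertex. A set $S$ is legal if $|S\cap V_i|\le1$ for all $i$. $\deg_H(S)$ is the number of $(k-|S|)$-sets $S'$ with $S\cup S'\in E(H)$; $\delta'_{k-1}(H)$ is the minimum of $\deg_H(S)$ over legal $(k-1)$-sets $S$. A copy of $F$ in $H$ is a subgraph of $H$ isomorphic to $F$. *)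

(* Defs.v *)
From mathcomp Require Import all_boot all_order all_algebra.
From mathcomp Require Import reals.
Set Implicit Arguments. Unset Strict Implicit. Unset Printing Implicit Defensive.

(* A k-partite k-graph whose parts all have n vertices: vertex set
   'I_k * 'I_n, where vertex (i, j) lies in part V_i. *)

Definition legal (k n : nat) (S : {set 'I_k * 'I_n}) : bool :=
  [forall i : 'I_k, #|[set x in S | x.1 == i]| <= 1].

Definition kpk_graph (k n : nat) (E : {set {set 'I_k * 'I_n}}) : bool :=
  [forall e in E, legal e && (#|e| == k)].

Definition codeg (k n : nat) (E : {set {set 'I_k * 'I_n}})
    (S : {set 'I_k * 'I_n}) : nat :=
  #|[set x | (x |: S) \in E]|.

Definition is_copy (TF TH : finType) (EF : {set {set TF}})
    (EH : {set {set TH}}) (c : {set TH} * {set {set TH}}) : bool :=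
  [exists f : {ffun TF -> TH},
     [&& injectiveb f, c.1 == f @: setT,
         c.2 == [set f @: (e : {set TF}) | e in EF] & c.2 \subset EH]].

Definition copies_at (TF TH : finType) (EF : {set {set TF}})
    (EH : {set {set TH}}) (v : TH) : {set {set TH} * {set {set TH}}} :=
  [set c | is_copy EF EH c && (v \in c.1)].

(* Main.v *)
Require Import Defs.
From mathcomp Require Import all_boot all_order all_algebra reals.
From mathcomp Require Import zify ring lra.
Import Order.TTheory GRing.Theory Num.Theory.
Local Open Scope ring_scope.
Set Implicit Arguments. Unset Strict Implicit. Unset Printing Implicit Defensive.

Section Gen.
Variable R : realType.

Lemma sum_split (X Y : finType) (up : X -> Y -> X) (get : X -> Y) (F : X -> R) :
  (forall C a, up (up C a) (get C) = C) -> (forall C a, get (up C a) = a) ->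
  \sum_(C : X) \sum_(a : Y) F (up C a) = #|Y|%:R * \sum_(g : X) F g.
Proof.
move=> H1 H2.
rewrite pair_big /=.
pose Psi := fun q : X * Y => (up q.1 q.2, get q.1).
have PsiK : involutive Psi by case=> g b; rewrite /Psi /= H1 H2.
rewrite (reindex_inj (inv_inj PsiK)) /=.
rewrite /Psi /=. under eq_bigr => q _ do rewrite H1.
rewrite -(pair_big xpredT xpredT (fun g (b : Y) => F g)) /= mulr_sumr. apply eq_bigr => g _.
by rewrite sumr_const mulr_natl.
Qed.

Lemma cheb (T : finType) (P : {pred T}) (y : T -> R) r :
  (forall t, 0 <= y t) ->
  (\sum_(t in P) y t) * (\sum_(t in P) y t ^+ r) <= #|P|%:R * \sum_(t in P) y t ^+ r.+1.
Proof.
move=> y0.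
have H : 0 <= \sum_(a in P) \sum_(b in P) (y a - y b) * (y a ^+ r - y b ^+ r).
  apply: sumr_ge0 => a _; apply: sumr_ge0 => b _.
  have [h|h] := leP (y a) (y b).
    apply: mulr_le0; first by rewrite subr_le0.
    by rewrite subr_le0; apply: lerXn2r; rewrite ?nnegrE ?y0.
  apply: mulr_ge0; first by rewrite subr_ge0 ltW.
  rewrite subr_ge0; apply: lerXn2r; rewrite ?nnegrE ?y0 //; exact: ltW.
have E : \sum_(a in P) \sum_(b in P) (y a - y b) * (y a ^+ r - y b ^+ r)
   = 2%:R * (#|P|%:R * \sum_(t in P) y t ^+ r.+1 - (\sum_(t in P) y t) * (\sum_(t in P) y t ^+ r)).
  have pt : forall a b, (y a - y b) * (y a ^+ r - y b ^+ r) = (y a ^+ r.+1 + y b ^+ r.+1) - (y a * y b ^+ r + y b * y a ^+ r).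
    by move=> a b; rewrite !exprS; ring.
  under eq_bigr => a _ do under eq_bigr => b _ do rewrite pt.
  under eq_bigr => a _ do rewrite sumrB !big_split /=.
  rewrite sumrB !big_split /=.
  set A := \sum_(t in P) y t ^+ r.+1. set B := \sum_(t in P) y t. set C := \sum_(t in P) y t ^+ r.
  have e1 : \sum_(i in P) \sum_(j in P) y i ^+ r.+1 = #|P|%:R * A.
    by rewrite /A mulr_sumr; apply: eq_bigr => i _; rewrite sumr_const mulr_natl.
  have e2 : \sum_(i in P) \sum_(j in P) y j ^+ r.+1 = #|P|%:R * A.
    by rewrite sumr_const mulr_natl.
  have e3 : \sum_(i in P) \sum_(j in P) y i * y j ^+ r = B * C.
    by rewrite /B mulr_suml; apply: eq_bigr => i _; rewrite mulr_sumr.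
  have e4 : \sum_(i in P) \sum_(j in P) y j * y i ^+ r = B * C.
    by rewrite /C mulr_sumr; apply: eq_bigr => i _; rewrite -mulr_suml.
  rewrite e1 e2 e3 e4. ring.
rewrite E in H. rewrite -subr_ge0. by rewrite pmulr_rge0 // in H.
Qed.

Lemma holder (T : finType) (P : {pred T}) (y : T -> R) r :
  (forall t, 0 <= y t) ->
  (\sum_(t in P) y t) ^+ r.+1 <= #|P|%:R ^+ r * \sum_(t in P) y t ^+ r.+1.
Proof.
move=> y0; elim: r => [|r IH]; first by rewrite expr0 mul1r expr1.
have B0 : 0 <= \sum_(t in P) y t by apply: sumr_ge0.
rewrite [X in X <= _]exprS.
apply: le_trans (ler_wpM2l B0 IH) _.
rewrite mulrCA exprSr -mulrA. apply: ler_wpM2l; first by apply: exprn_ge0; apply: ler0n.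
exact: cheb.
Qed.

Definition fupd (I Tt : finType) (g : {ffun I -> Tt}) (x : I) (t : Tt) : {ffun I -> Tt} :=
  [ffun y => if y == x then t else g y].

Lemma slot_sum (I Tt : finType) (x : I) (F : {ffun I -> Tt} -> R) :
  \sum_(g : {ffun I -> Tt}) \sum_(t : Tt) F (fupd g x t) = #|Tt|%:R * \sum_g F g.
Proof.
apply: (@sum_split _ _ (fun g t => fupd g x t) (fun g => g x) F).
  by move=> C a; apply/ffunP => y; rewrite !ffunE; case: eqP => // ->.
by move=> C a; rewrite ffunE eqxx.
Qed.

Lemma eqle (x y : R) : x = y -> x <= y. Proof. by move=> ->. Qed.

Lemma card_sumR (T : finType) (S : {pred T}) : (#|S|%:R : R) = \sum_(t : T) (t \in S)%:R.
Proof. by rewrite -sum1_card natr_sum big_mkcond /=; apply: eq_bigr => t _; case: (t \in S). Qed.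

Lemma sum_pred1 (T : finType) (t0 : T) : \sum_(t : T) ((t == t0)%:R : R) = 1.
Proof. by rewrite (bigD1 t0) //= eqxx big1 ?addr0 // => t /negbTE ->. Qed.

Lemma card_sumR' (T : finType) (P : pred T) : \sum_(t : T) (P t)%:R = (#|[set t | P t]|%:R : R).
Proof. by rewrite card_sumR; apply: eq_bigr => t _; rewrite inE. Qed.

End Gen.

Section Main.
Variables (R : realType) (k m n : nat) (alpha : R) (EH : {set {set 'I_k * 'I_n}}).
Hypothesis EHk : kpk_graph EH.
Hypothesis Hcod : forall S, legal S -> #|S| = k.-1 -> alpha * n%:R <= (codeg EH S)%:R.

Definition Tv (y : 'I_k -> 'I_n) : {set 'I_k * 'I_n} := [set (i, y i) | i : 'I_k].

Lemma codeg_lb (y : 'I_k -> 'I_n) (q : 'I_k) :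
  alpha * n%:R <= #|[set w | Tv (fun i => if i == q then w else y i) \in EH]|%:R.
Proof.
pose S := [set (i, y i) | i in [set~ q]].
have injf : injective (fun i : 'I_k => (i, y i)) by move=> i j [].
have Sl : legal S.
  apply/forallP => i.
  rewrite -(cards1 (i, y i)) subset_leq_card //.
  apply/subsetP => u; rewrite !inE => /andP[/imsetP [j _ ->] /= /eqP ->].
  by rewrite ?inE ?eqxx.
have Sc : #|S| = k.-1 by rewrite card_imset // cardsC1 card_ord.
apply: le_trans (Hcod Sl Sc) _.
rewrite ler_nat /codeg.
have -> : [set x | x |: S \in EH] = (fun w => (q, w)) @: [set w | Tv (fun i => if i == q then w else y i) \in EH].
  apply/setP => [[i w]]; rewrite inE.
  have eT : forall w', (q, w') |: S = Tv (fun i => if i == q then w' else y i).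
    move=> w'; apply/setP => u; rewrite in_setU1; apply/idP/idP.
      case/orP => [/eqP -> | /imsetP [j]]; first by apply/imsetP; exists q; rewrite ?eqxx.
      rewrite !inE => jq ->; apply/imsetP; exists j => //; by rewrite (negbTE jq).
    case/imsetP => j _ ->; case: (eqVneq j q) => [->|jq]; first by rewrite eqxx.
    by apply/orP; right; apply/imsetP; exists j; rewrite ?inE.
  case: (eqVneq i q) => [->|iq].
    rewrite eT; apply/idP/imsetP => [h|[w' ]]; first by exists w; rewrite ?inE.
    by rewrite inE => h [->].
  apply/idP/imsetP => [h|[w' _ [eiq _]]]; last by rewrite eiq eqxx in iq.
  exfalso; move: EHk => /forallP /(_ ((i, w) |: S)); rewrite h /= => /andP[lg /eqP ck].
  have yS : (i, y i) \in S by apply/imsetP; exists i; rewrite ?inE.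
  case: (boolP ((i, w) \in S)) => wS.
    have : (i, w) |: S = S by apply/setP => u; rewrite in_setU1; case: eqP => // ->.
    move=> e; rewrite e Sc in ck. move: ck (ltn_ord q); lia.
  move/forallP: lg => /(_ i).
  have : [set (i, w); (i, y i)] \subset [set x in (i, w) |: S | x.1 == i].
    by apply/subsetP => u; rewrite !inE => /orP [] /eqP -> /=; rewrite ?eqxx ?yS ?orbT.
  move/subset_leq_card; rewrite cards2.
  have -> : ((i, w) != (i, y i)) by apply/negP => /eqP e; move: wS; rewrite e yS.
  move=> h1 h2; have := leq_trans h1 h2. done.
by rewrite card_imset // => a b [].
Qed.

Variables (i0 : 'I_k) (z : 'I_m) (j0 : 'I_n).
Hypothesis npos : (0 < n)%N.
Hypothesis k2 : (1 < k)%N.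
Hypothesis alpha0 : 0 <= alpha.

Local Notation X := {ffun 'I_k * 'I_m -> 'I_n}.
Local Notation A := {ffun 'I_m -> 'I_n}.

Definition trans (g : X) (h : {ffun 'I_k -> 'I_m}) := Tv (fun i => g (i, h i)).
Definition cond (B : {set 'I_k}) (g : X) : bool :=
  (g (i0, z) == j0) && [forall h : {ffun 'I_k -> 'I_m},
     [forall q, (q \notin B) ==> (h q == z)] ==> (trans g h \in EH)].
Definition NB B : R := \sum_(g : X) (cond B g)%:R.
Definition PP : R := \sum_(g : X) (g (i0, z) == j0)%:R.
Definition pupd (g : X) (p : 'I_k) (a : A) : X := [ffun y => if y.1 == p then a y.2 else g y].
Definition constf (w : 'I_n) : A := [ffun _ => w].

Lemma part_sum p (F : X -> R) :
  \sum_(C : X) \sum_(a : A) F (pupd C p a) = #|A|%:R * \sum_(g : X) F g.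
Proof.
apply: (@sum_split _ _ _ (fun C a => pupd C p a) (fun C => [ffun j => C (p, j)]) F).
  move=> C a; apply/ffunP => [[i j]]; rewrite !ffunE /=; case: eqP => // ->.
  by rewrite ?ffunE.
by move=> C a; apply/ffunP => j; rewrite !ffunE eqxx.
Qed.

Lemma XP : (#|X|%:R : R) = n%:R * PP.
Proof.
rewrite -[in n%:R](card_ord n) /PP -(slot_sum (i0, z)).
rewrite -sum1_card natr_sum; apply: eq_bigr => g _.
under eq_bigr => t _ do rewrite ffunE eqxx.
by rewrite sum_pred1.
Qed.

Lemma cardA : (#|A|%:R : R) = n%:R ^+ m.
Proof. by rewrite card_ffun !card_ord natrX. Qed.

Lemma PP0 : 0 <= PP.
Proof. by apply: sumr_ge0 => g _; apply: ler0n. Qed.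
Lemma count_ge (G : {set 'I_n}) :
  (j0 \in G)%:R * #|G|%:R ^+ m <= n%:R * \sum_(a : A) ((a z == j0) && [forall j, a j \in G])%:R :> R.
Proof.
rewrite -[in n%:R](card_ord n) -(slot_sum z).
rewrite -natrX.
have -> : (#|G| ^ m)%N = #|finfun.ffun_on_mem 'I_m (mem G)| by rewrite card_ffun_on card_ord.
rewrite card_sumR mulr_sumr.
apply: ler_sum => a _.
case: (boolP (j0 \in G)) => hj; last by rewrite mul0r; apply: sumr_ge0 => t _; apply: ler0n.
case: (boolP (a \in ffun_on G)) => ha; last by rewrite mulr0; apply: sumr_ge0 => t _; apply: ler0n.
rewrite mulr1 (bigD1 j0) //= ffunE eqxx /=.
have -> : [forall j, fupd a z j0 j \in G].
  apply/forallP => j; rewrite ffunE; case: eqP => // _; exact: (ffun_onP ha).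
rewrite eqxx /= lerDl; apply: sumr_ge0 => t _; apply: ler0n.
Qed.

Lemma step0 : alpha ^+ m.+1 * PP <= NB [set i0].
Proof.
pose G' := fun C : X => [set w | Tv (fun i => if i == i0 then w else C (i, z)) \in EH].
have E1 : forall C a, cond [set i0] (pupd C i0 a) = (a z == j0) && [forall j, a j \in G' C].
  move=> C a; rewrite /cond ffunE eqxx /=; congr andb.
  apply/forallP/forallP => H.
    move=> j; have := H (fupd [ffun _ => z] i0 j).
    have -> : [forall q, (q \notin [set i0]) ==> (fupd [ffun _ => z] i0 j q == z)].
      by apply/forallP => q; rewrite !ffunE inE; case: eqP => //= _; rewrite eqxx.
    rewrite /= inE /trans; congr (_ \in EH); apply: eq_imset => i; rewrite !ffunE /=.
    by case: eqP => // ->; rewrite !ffunE eqxx.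
  move=> h; apply/implyP => /forallP hz.
  have := H (h i0); rewrite inE /trans; congr (_ \in EH); apply: eq_imset => i; rewrite !ffunE /=.
  case: eqP => [-> //| /eqP ii0]. by move: (hz i); rewrite inE ii0 /= => /eqP ->.
have G'lb : forall C, alpha * n%:R <= #|G' C|%:R.
  by move=> C; apply: (codeg_lb (fun i => C (i, z)) i0).
have nR : (0 : R) < n%:R by rewrite ltr0n.
have [q qi0] : exists q : 'I_k, q != i0.
  case: (eqVneq i0 (Ordinal k2)) => [e|ne]; last by exists (Ordinal k2); rewrite eq_sym.
  have k0 : (0 < k)%N by apply: ltn_trans k2.
  by exists (Ordinal k0); apply/negP => /eqP/(congr1 val); rewrite e.
have S1 : alpha * #|X|%:R <= \sum_(C : X) (j0 \in G' C)%:R.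
  rewrite -(ler_pM2l nR).
  have -> : n%:R * \sum_(C : X) (j0 \in G' C)%:R = #|'I_n|%:R * \sum_(C : X) (j0 \in G' C)%:R by rewrite card_ord.
  rewrite -(slot_sum (q, z)) mulrCA.
  rewrite -sum1_card natr_sum !mulr_sumr; apply: ler_sum => C _.
  rewrite mulr1.
  have := codeg_lb (fun i => if i == i0 then j0 else C (i, z)) q.
  rewrite card_sumR => /le_trans; apply; apply: eqle.
  apply: eq_bigr => t _; rewrite !inE; congr ((_ \in EH)%:R); apply: eq_imset => i.
  rewrite !ffunE; case: (eqVneq i q) => [->|iq]; first by rewrite (negbTE qi0) eqxx.
  case: (i == i0) => //. rewrite xpair_eqE eqxx /=. by rewrite (negbTE iq).
have M : n%:R * #|A|%:R * NB [set i0] >= \sum_(C : X) (j0 \in G' C)%:R * (alpha * n%:R) ^+ m.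
  rewrite -mulrA /NB -(part_sum i0) mulr_sumr; apply: ler_sum => C _.
  under eq_bigr => a _ do rewrite E1.
  apply: le_trans (count_ge (G' C)).
  apply: ler_wpM2l; first by apply: ler0n.
  by apply: lerXn2r; rewrite ?nnegrE ?mulr_ge0 ?ler0n ?(le_trans _ (G'lb C)) ?mulr_ge0 ?ler0n.
rewrite -mulr_suml in M.
have := le_trans (ler_wpM2r _ S1) M.
rewrite exprn_ge0 ?mulr_ge0 ?ler0n // => /(_ isT).
rewrite XP cardA => H.
rewrite -(ler_pM2l (_ : 0 < n%:R * n%:R ^+ m)) ?mulr_gt0 ?exprn_gt0 //.
apply: le_trans H; apply: eqle. rewrite exprMn exprS. ring.
Qed.
Lemma NB0 B : 0 <= NB B.
Proof. by apply: sumr_ge0 => g _; apply: ler0n. Qed.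

Lemma stepp (B : {set 'I_k}) (p : 'I_k) (c : R) :
  p != i0 -> p \notin B -> 0 <= c -> c * PP <= NB B -> c ^+ m * PP <= NB (p |: B).
Proof.
move=> pi0 pB c0 HB.
have m0 : (0 < m)%N by case: (m) z => [[]|].
pose G := fun C : X => [set w | cond B (pupd C p (constf w))].
have i0p : (i0 == p) = false by rewrite eq_sym (negbTE pi0).
have root : forall C a, pupd C p a (i0, z) = C (i0, z) by move=> C a; rewrite ffunE /= i0p.
have E1 : forall C a, cond B (pupd C p a) = (a z \in G C).
  move=> C a; rewrite inE /cond !root; congr andb.
  apply: eq_forallb => h; case: (boolP [forall q, _]) => //= /forallP hz.
  congr (_ \in EH); apply: eq_imset => i; rewrite !ffunE /=.
  case: eqP => // ->; move: (hz p); rewrite pB /= => /eqP -> //.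
have E2 : forall C a, cond (p |: B) (pupd C p a) = [forall j, a j \in G C].
  move=> C a; apply/idP/forallP.
    case/andP => r H j; rewrite inE /cond root; rewrite root in r; rewrite r /=.
    apply/forallP => h; apply/implyP => /forallP hz.
    move/forallP: H => /(_ (fupd h p j)).
    have -> : [forall q, (q \notin p |: B) ==> (fupd h p j q == z)].
      apply/forallP => q; rewrite !inE ffunE negb_or; case: eqP => //= _; exact: hz.
    move=> /= H; rewrite (_ : trans _ _ = trans (pupd C p a) (fupd h p j)) //.
    apply: eq_imset => i; rewrite !ffunE /=; case: eqP => [->|]; by rewrite ?ffunE ?eqxx.
  move=> H; have := H z; rewrite inE /cond root => /andP [r _].
  rewrite root r /=; apply/forallP => h; apply/implyP => /forallP hz.
  have := H (h p); rewrite inE /cond => /andP [_ /forallP /(_ (fupd h p z))].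
  have -> : [forall q, (q \notin B) ==> (fupd h p z q == z)].
    apply/forallP => q; rewrite ffunE; case: (eqVneq q p) => [_|qp]; first by rewrite ?eqxx implybT.
    by apply/implyP => qB; move: (hz q); rewrite !inE negb_or qB andbT qp.
  move=> /= H2; rewrite (_ : trans _ _ = trans (pupd C p (constf (a (h p)))) (fupd h p z)) //.
  apply: eq_imset => i; rewrite !ffunE /=; case: eqP => [->|]; by rewrite ?ffunE ?eqxx.
have nR : (0 : R) < n%:R by rewrite ltr0n.
pose y := fun C => (#|G C|%:R : R).
have y0 : forall C, 0 <= y C by move=> C; apply: ler0n.
have S1 : n%:R * NB B = \sum_(C : X) y C.
  apply: (mulfI (_ : (#|A|%:R : R) != 0)); first by rewrite cardA expf_neq0 // lt0r_neq0.
  rewrite mulrCA /NB -(part_sum p) mulr_sumr mulr_sumr; apply: eq_bigr => C _.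
  under eq_bigr => a _ do rewrite E1.
  have -> : (n%:R : R) * \sum_(a : A) (a z \in G C)%:R = #|'I_n|%:R * \sum_(a : A) (a z \in G C)%:R by rewrite card_ord.
  rewrite -(slot_sum z) /y.
  under eq_bigr => a _ do (under eq_bigr => t _ do rewrite ffunE eqxx).
  under eq_bigr => a _ do rewrite -card_sumR.
  by rewrite sumr_const mulr_natl.
have S2 : #|A|%:R * NB (p |: B) = \sum_(C : X) y C ^+ m.
  rewrite /NB -(part_sum p); apply: eq_bigr => C _.
  under eq_bigr => a _ do rewrite E2.
  rewrite /y -natrX.
  have -> : (#|G C| ^ m)%N = #|finfun.ffun_on_mem 'I_m (mem (G C))| by rewrite card_ffun_on card_ord.
  rewrite card_sumR; apply: eq_bigr => a _; congr (_%:R).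
pose P := [pred C : X | C (i0, z) == j0].
have supp : forall C, C \notin P -> y C = 0.
  move=> C; rewrite inE => nC; rewrite /y; apply/eqP; rewrite pnatr_eq0 cards_eq0.
  apply/eqP/setP => w; rewrite !inE /cond root; by rewrite (negbTE nC).
have S1P : \sum_(C : X) y C = \sum_(C in P) y C.
  by rewrite [in RHS]big_mkcond; apply: eq_bigr => C _; case: ifP => // /negbT /supp.
have S2P : \sum_(C in P) y C ^+ m <= \sum_(C : X) y C ^+ m.
  rewrite [in X in _ <= X](bigID (mem P)) /= lerDl; apply: sumr_ge0 => C _; exact: exprn_ge0.
have PPc : PP = #|P|%:R by rewrite card_sumR.
have Hol := @holder _ _ P y m.-1 y0.
rewrite prednK // -S1P -S1 -PPc in Hol.
have Hc : (c * PP) ^+ m <= NB B ^+ m by apply: lerXn2r; rewrite ?nnegrE ?mulr_ge0 ?PP0 ?NB0.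
have key : n%:R ^+ m * (c ^+ m * PP ^+ m) <= PP ^+ m.-1 * (n%:R ^+ m * NB (p |: B)).
  have -> : n%:R ^+ m * NB (p |: B) = \sum_(C : X) y C ^+ m by rewrite -cardA S2.
  apply: le_trans _ (ler_wpM2l _ S2P); last by apply: exprn_ge0; apply: PP0.
  apply: le_trans _ Hol; rewrite exprMn; apply: ler_wpM2l; first by apply: exprn_ge0; apply: ler0n.
  by rewrite -exprMn.
have [PPe|PPn] := eqVneq PP 0.
  by rewrite PPe mulr0 NB0.
have PPp : 0 < PP by rewrite lt0r PPn PP0.
have : n%:R ^+ m * PP ^+ m.-1 * (c ^+ m * PP) <= n%:R ^+ m * PP ^+ m.-1 * NB (p |: B).
  apply: le_trans _ (le_trans key _); apply: eqle.
    have e : PP ^+ m = PP ^+ m.-1 * PP by rewrite -exprSr prednK.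
    rewrite e; ring.
  ring.
by rewrite ler_pM2l // mulr_gt0 // exprn_gt0.
Qed.

Hypothesis alpha1 : alpha <= 1.

Lemma iter_all s :
  alpha ^+ (m.+1 * m ^ s) * PP <= NB (i0 |: [set q : 'I_k | (q < s)%N]).
Proof.
have m0 : (0 < m)%N by case: (m) z => [[]|].
elim: s => [|s IH].
  rewrite expn0 muln1.
  have -> : i0 |: [set q : 'I_k | (q < 0)%N] = [set i0].
    by apply/setP => q; rewrite !inE ltn0 orbF.
  exact: step0.
set c := alpha ^+ (m.+1 * m ^ s) in IH.
have c0 : 0 <= c by apply: exprn_ge0.
have c1 : c <= 1 by apply: exprn_ile1.
have -> : alpha ^+ (m.+1 * m ^ s.+1) = c ^+ m by rewrite /c -exprM expnSr mulnA.
have [sk|sk] := ltnP s k; last first.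
  have -> : i0 |: [set q : 'I_k | (q < s.+1)%N] = i0 |: [set q : 'I_k | (q < s)%N].
    apply/setP => q; rewrite !inE; congr orb; apply/idP/idP => h; last exact: ltnW.
    by apply: leq_trans (ltn_ord q) sk.
  apply: le_trans IH; apply: ler_wpM2r; [exact: PP0 | exact: ler_iXnr].
pose p := Ordinal sk.
have [pe|pne] := eqVneq p i0.
  have -> : i0 |: [set q : 'I_k | (q < s.+1)%N] = i0 |: [set q : 'I_k | (q < s)%N].
    apply/setP => q; rewrite !inE ltnS leq_eqVlt; case: (eqVneq q i0) => [//|qi0] /=.
    have -> : (q == s :> nat) = false; last by [].
    by apply/negP => /eqP e; move/eqP: qi0; apply; rewrite -pe; apply: val_inj; rewrite /= e.
  apply: le_trans IH; apply: ler_wpM2r; [exact: PP0 | exact: ler_iXnr].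
have -> : i0 |: [set q : 'I_k | (q < s.+1)%N] = p |: (i0 |: [set q : 'I_k | (q < s)%N]).
  apply/setP => q; rewrite !inE ltnS leq_eqVlt orbCA; congr orb.
apply: stepp => //; first by rewrite !inE negb_or pne /= ltnn.
Qed.
Lemma pair_count0 (x y : 'I_k * 'I_m) : x != y -> x != (i0, z) ->
  n%:R * \sum_(g : X) ((g (i0, z) == j0) && (g x == g y))%:R = PP.
Proof.
move=> xy xr.
have -> : n%:R * \sum_(g : X) ((g (i0, z) == j0) && (g x == g y))%:R =
   #|'I_n|%:R * \sum_(g : X) ((g (i0, z) == j0) && (g x == g y))%:R by rewrite card_ord.
rewrite -(slot_sum x) /PP; apply: eq_bigr => g _.
have rx : ((i0, z) == x) = false by rewrite eq_sym (negbTE xr).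
have yx : (y == x) = false by rewrite eq_sym (negbTE xy).
under eq_bigr => t _ do rewrite !ffunE rx yx eqxx.
case: (g (i0, z) == j0) => /=; last by rewrite big1.
by rewrite sum_pred1.
Qed.

Lemma pair_count (x y : 'I_k * 'I_m) : x != y ->
  n%:R * \sum_(g : X) ((g (i0, z) == j0) && (g x == g y))%:R = PP.
Proof.
move=> xy; case: (eqVneq x (i0, z)) => [ex|xr]; last exact: pair_count0.
have yr : y != (i0, z) by rewrite -ex eq_sym.
have yx : y != x by rewrite eq_sym.
have h := @pair_count0 y x yx yr.
rewrite -h; congr (_ * _); apply: eq_bigr => g _.
by rewrite [g x == _]eq_sym.
Qed.

Definition good (g : X) := cond setT g && injectiveb g.

Lemma bad_bound :
  NB setT <= \sum_(g : X) (good g)%:R + ((k * m)%N%:R ^+ 2 * PP) / n%:R.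
Proof.
have nR : (0 : R) < n%:R by rewrite ltr0n.
pose F := fun (g : X) (x y : 'I_k * 'I_m) => (((x != y) && (g (i0, z) == j0)) && (g x == g y))%:R : R.
have pt : forall g : X, (cond setT g)%:R <= (good g)%:R + \sum_x \sum_y F g x y.
  move=> g; rewrite /good; case: (boolP (cond setT g)) => cg /=; last first.
    by rewrite add0r; do 2 (apply: sumr_ge0 => ? _); apply: ler0n.
  case: (boolP (injectiveb g)) => ig; first by rewrite lerDl; do 2 (apply: sumr_ge0 => ? _); apply: ler0n.
  move/injectivePn: ig => [x [y xy gxy]].
  rewrite add0r (bigD1 x) //= (bigD1 y) //= /F xy gxy eqxx.
  move: cg; rewrite /cond => /andP [-> _] /=.
  rewrite -addrA lerDl; apply: addr_ge0; apply: sumr_ge0 => ? _; [apply: ler0n | apply: sumr_ge0 => ? _; apply: ler0n].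
apply: le_trans (ler_sum _ (fun g _ => pt g)) _.
rewrite big_split /= lerD2l.
rewrite exchange_big /=; under eq_bigr => x _ do rewrite exchange_big /=.
have b : forall x y, \sum_(g : X) F g x y <= PP / n%:R.
  move=> x y; case: (eqVneq x y) => [->|xy].
    by rewrite big1 ?divr_ge0 ?PP0 ?ler0n // => g _; rewrite /F eqxx.
  rewrite ler_pdivlMr // mulrC -(pair_count xy) /F; apply: eqle; congr (_ * _).
  by apply: eq_bigr => g _; rewrite xy.
have s2 : \sum_(x : 'I_k * 'I_m) \sum_(y : 'I_k * 'I_m) \sum_(g : X) F g x y <= \sum_(x : 'I_k * 'I_m) \sum_(y : 'I_k * 'I_m) PP / n%:R.
  by apply: ler_sum => x _; apply: ler_sum => y _; exact: b.
apply: le_trans s2 _.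
under eq_bigr => x _ do rewrite sumr_const.
rewrite sumr_const -mulrnA -(mulr_natl (PP / n%:R)).
rewrite (_ : #|_| = (k * m)%N); last by rewrite card_prod !card_ord.
rewrite natrM; apply: eqle; rewrite expr2 !mulrA //.
Qed.
Lemma extract (e : {set 'I_k * 'I_m}) : legal e -> #|e| = k ->
  exists h : {ffun 'I_k -> 'I_m}, e = [set (i, h i) | i : 'I_k].
Proof.
move=> /forallP le ce.
pose ei := fun i : 'I_k => [set x in e | x.1 == i].
have sum_e : (\sum_(i : 'I_k) #|ei i| = k)%N.
  apply: etrans _ ce; rewrite -sum1_card (partition_big (fun x : 'I_k * 'I_m => x.1) xpredT) //=.
  apply: eq_bigr => i _; rewrite -sum1_card; apply: eq_bigl => x; by rewrite !inE.
have one : forall i, #|ei i| = 1%N.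
  have s0 : (\sum_(i : 'I_k) (1 - #|ei i|) = 0)%N.
    apply/eqP; rewrite -(eqn_add2r (\sum_(i : 'I_k) #|ei i|)) add0n -big_split /= sum_e.
    rewrite (eq_bigr (fun _ => 1%N)) ?sum1_card ?card_ord // => i _.
    by rewrite subnK // le.
  move=> i; move/eqP: s0; rewrite sum_nat_eq0 => /forallP /(_ i) /implyP /(_ isT).
  by move: (le i); rewrite /ei; case: #|_| => [|[]].
pose h := [ffun i => if [pick x in ei i] is Some x then x.2 else z].
have hP : forall i, ei i = [set (i, h i)].
  move=> i; have /eqP /cards1P [x ex] := one i.
  have xi : x \in ei i by rewrite ex set11.
  rewrite ex /h ffunE; case: pickP => [y yi|/(_ x)]; last by rewrite xi.
  move: yi; rewrite ex !inE => /eqP ->.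
  by move: xi; rewrite /ei !inE => /andP [_ /eqP <-]; case: (x).
exists h; apply/setP => x; apply/idP/imsetP.
  move=> xe; exists x.1 => //.
  have : x \in ei x.1 by rewrite !inE xe eqxx.
  by rewrite hP inE => /eqP.
move=> [i _ ->].
have : (i, h i) \in ei i by rewrite hP set11.
by rewrite !inE => /andP [].
Qed.

Variable EF : {set {set 'I_k * 'I_m}}.
Hypothesis EFk : kpk_graph EF.

Definition Phi (g : X) : {set 'I_k * 'I_n} * {set {set 'I_k * 'I_n}} :=
  let f := fun x : 'I_k * 'I_m => (x.1, g x) in
  (f @: setT, [set f @: (e : {set 'I_k * 'I_m}) | e in EF]).

Lemma Phi_copy g : good g -> Phi g \in copies_at EF EH (i0, j0).
Proof.
case/andP => /andP [r ch] ig.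
rewrite inE; apply/andP; split; last first.
  by apply/imsetP; exists (i0, z) => //=; rewrite (eqP r).
apply/existsP; exists [ffun x => (x.1, g x)].
have fE : [ffun x => (x.1, g x)] =1 (fun x : 'I_k * 'I_m => (x.1, g x)) by move=> x; rewrite ffunE.
apply/and4P; split.
- apply/injectiveP => x y; rewrite !ffunE => [[_]]; move/injectiveP: ig; apply.
- by rewrite /Phi /=; apply/eqP; apply: eq_imset => x; rewrite fE.
- rewrite /Phi /=; apply/eqP; apply: eq_imset => e; apply: eq_imset => x; by rewrite fE.
apply/subsetP => s /imsetP [e eEF ->].
move/forallP: EFk => /(_ e); rewrite eEF /= => /andP [le /eqP ce].
have [h eh] := extract le ce.
move/forallP: ch => /(_ h); rewrite (_ : [forall q, _] = true) /=; last by apply/forallP => q; rewrite inE.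
rewrite eh /trans /Tv -imset_comp; congr (_ \in EH); apply: eq_imset => i //.
Qed.
Lemma good_count :
  (#|[set g : X | good g]| <= #|copies_at EF EH (i0, j0)| * (k * m) ^ (k * m))%N.
Proof.
rewrite -sum1_card (partition_big Phi (mem (copies_at EF EH (i0, j0)))) /=; last first.
  by move=> g; rewrite inE => /Phi_copy.
rewrite -sum_nat_const; apply: leq_sum => c _.
rewrite (eq_bigl (fun g => g \in [set g : X | good g && (Phi g == c)])); last first.
  by move=> g; rewrite !inE.
rewrite sum1_card.
case: (set_0Vmem [set g : X | good g && (Phi g == c)]) => [->|[g0]]; first by rewrite cards0.
rewrite inE => /andP [_ /eqP ec].
pose F := fun g : X => [ffun x : 'I_k * 'I_m => (x.1, g x)].
have Finj : injective F.
  move=> g1 g2 e; apply/ffunP => x; move/ffunP: e => /(_ x); rewrite !ffunE; by case.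
rewrite -(card_imset _ Finj).
have c1 : (#|c.1| <= k * m)%N.
  rewrite -ec /Phi /=; apply: leq_trans (leq_imset_card _ _) _.
  by rewrite cardsT card_prod !card_ord.
have sub : F @: [set g : X | good g && (Phi g == c)] \subset finfun.ffun_on_mem ('I_k * 'I_m)%type (mem c.1).
  apply/subsetP => f /imsetP [g]; rewrite inE => /andP [_ /eqP <-] ->.
  apply/ffun_onP => x; rewrite /F ffunE /Phi /=; apply/imsetP; exists x => //.
apply: leq_trans (subset_leq_card sub) _.
have km0 : (0 < k * m)%N.
  rewrite muln_gt0 (ltn_trans _ k2) //=; by case: (m) z => [[]|].
rewrite card_ffun_on card_prod !card_ord leq_exp2r //.
Qed.
Lemma PPval : PP = n%:R ^+ (k * m).-1.
Proof.
have km0 : (0 < k * m)%N.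
  rewrite muln_gt0 (ltn_trans _ k2) //=; by case: (m) z => [[]|].
apply: (mulfI (_ : (n%:R : R) != 0)); first by rewrite pnatr_eq0 -lt0n.
rewrite -XP card_ffun card_prod !card_ord -exprS prednK // natrX //.
Qed.

Lemma main_bound :
  alpha ^+ (m.+1 * m ^ k) * PP - (k * m)%N%:R ^+ 2 * PP / n%:R <=
  ((#|copies_at EF EH (i0, j0)| * (k * m) ^ (k * m))%N)%:R.
Proof.
have h1 := iter_all k.
have eT : i0 |: [set q : 'I_k | (q < k)%N] = setT.
  by apply/setP => q; rewrite !inE ltn_ord orbT.
rewrite eT in h1.
have h2 := bad_bound.
rewrite lerBlDr; apply: le_trans h1 (le_trans h2 _).
rewrite lerD2r card_sumR' ler_nat; exact: good_count.
Qed.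
End Main.

Theorem lemma3p3 (R : realType) (k m : nat) (alpha : R)
    (EF : {set {set 'I_k * 'I_m}}) :
  (3 <= k)%N -> (1 <= m)%N -> 0 < alpha < 1 -> kpk_graph EF ->
  exists eta : R, 0 < eta /\
  exists n0 : nat, forall n : nat, (n0 <= n)%N ->
    forall EH : {set {set 'I_k * 'I_n}}, kpk_graph EH ->
    (forall S : {set 'I_k * 'I_n}, legal S -> #|S| = k.-1 ->
        alpha * n%:R <= (codeg EH S)%:R) ->
    forall v : 'I_k * 'I_n,
      eta * n%:R ^+ (k * m).-1 <= (#|copies_at EF EH v|)%:R.
Proof.
move=> hk hm /andP [a0 a1] EFk.
have k2 : (1 < k)%N by apply: leq_trans hk.
set c := alpha ^+ (m.+1 * m ^ k).
have c0 : 0 < c by apply: exprn_gt0.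
set K := (k * m)%N.
set Q : R := (K ^ K)%N%:R.
have Q0 : 0 < Q.
  rewrite ltr0n expn_gt0 muln_gt0 hm (ltn_trans _ k2) //.
set D : R := K%:R ^+ 2.
have D0 : 0 <= D by apply: exprn_ge0; apply: ler0n.
exists (c / (2 * Q)); split; first by rewrite divr_gt0 // mulr_gt0.
have x0 : 0 <= 2 * D / c by apply: divr_ge0; [apply: mulr_ge0 | apply: ltW].

exists (maxn 1 (Num.Def.archi_bound (2 * D / c))) => n hn EH EHk Hcod [i0 j0].
have npos : (0 < n)%N by apply: leq_trans hn; rewrite leq_max leqnn.
have nb : 2 * D / c < n%:R.
  apply: lt_le_trans (archi_boundP x0) _; rewrite ler_nat.
  by apply: leq_trans hn; rewrite leq_max leqnn orbT.
have nR : (0 : R) < n%:R by rewrite ltr0n.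
pose z : 'I_m := Ordinal hm.
have mb := main_bound EHk Hcod i0 z j0 npos k2 (ltW a0) (ltW a1) EFk.
rewrite PPval // in mb.
set P := n%:R ^+ K.-1 in mb *.
have P0 : 0 <= P by apply: exprn_ge0; apply: ler0n.
have Dn : D / n%:R <= c / 2.
  rewrite ler_pdivrMr //.
  move: nb; rewrite ltr_pdivrMr // => nb.
  nra.
have h : c / 2 * P <= (#|copies_at EF EH (i0, j0)|)%:R * Q.
  apply: le_trans _ (le_trans mb _); last by rewrite natrM.
  have -> : c * P - D * P / n%:R = (c - D / n%:R) * P by rewrite mulrBl mulrAC.
  apply: ler_wpM2r => //; lra.
rewrite -(ler_pM2r Q0); apply: le_trans _ h; apply: eqle.
field. by rewrite lt0r_neq0.
Qed.
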